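(* Let $U_1$ be a vector space concentrated in degree $1$ (hence odd), set $U_0=\mathrm{End}(U_1)$ and recursively $U_{-p+1}=\mathrm{Hom}(U_1,U_{-p+2})$ for $p\ge 2$, and $U_{1-}=\bigoplus_{k\le1}U_k$. Define brackets $U_i\otimes U_j\to U_{i+j}$ for $i+j\le 1$ recursively by $[x,u]=x(u)$, $[u,x]=-(-1)^{|x|}x(u)$, and $[x,y](u)=[x,y(u)]+(-1)^{|y|}[x(u),y]$ for $x,y\in U_{0-}=\bigoplus_{k\le0}U_k$ and $u\in U_1$. Then $U_{1-}$ with this bracket is a semilocal Lie superalgebra (in particular $U_0=\mathfrak{gl}(U_1)$ as a Lie algebra).
   Context: All vector spaces are over $\mathbb{K}=\mathbb{R}$ or $\mathbb{C}$, $\mathbb{Z}$-graded, with parity equal to degree mod 2; $|x|$ is the degree. A semilocal Lie superalgebra is a graded space concentrated in degrees $\le 1$ with bilinear brackets $A_i\otimes A_j\to A_{i+j}$ defined whenever $i+j\le1$, satisfying $[x,y]=-(-1)^{|x||y|}[y,x]$ and $[x,[y,z]]-(-1)^{|x||y|}[y,[x,z]]=[[x,y],z]$ whenever all brackets involved are defined. *)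

(* Defs.v *)
From HB Require Import structures.
From mathcomp Require Import all_boot all_order all_algebra.
From mathcomp Require Import boolp zify.
From mathcomp Require Export reals complex.

Set Implicit Arguments.
Unset Strict Implicit.
Unset Printing Implicit Defensive.

Import GRing.Theory.
Local Open Scope ring_scope.

Record hom (K : fieldType) (V W : lmodType K) := Hom {
  hom_fun :> V -> W;
  hom_lin : linear hom_fun }.

Section HomSpace.
Variables (K : fieldType) (V W : lmodType K).

Lemma hom_ext (f g : hom V W) : (forall u, f u = g u) -> f = g.
Proof.
case: f g => [f fl] [g gl] /= efg.
have ef : f = g by apply: funext.
subst g; congr Hom; exact: Prop_irrelevance.
Qed.

HB.instance Definition _ := gen_eqMixin (hom V W).
HB.instance Definition _ := gen_choiceMixin (hom V W).

Lemma hom0_lin : linear (fun _ : V => (0 : W)).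
Proof. by move=> a u v; rewrite scaler0 addr0. Qed.
Definition hom0 := Hom hom0_lin.

Lemma homN_lin (f : hom V W) : linear (fun u => - f u).
Proof. by move=> a u v; rewrite (hom_lin f) opprD scalerN. Qed.
Definition homN f := Hom (homN_lin f).

Lemma homD_lin (f g : hom V W) : linear (fun u => f u + g u).
Proof.
move=> a u v; rewrite (hom_lin f) (hom_lin g) scalerDr.
by rewrite -!addrA; congr (_ + _); rewrite addrCA.
Qed.
Definition homD f g := Hom (homD_lin f g).

Lemma homZ_lin (c : K) (f : hom V W) : linear (fun u => c *: f u).
Proof.
move=> a u v; rewrite (hom_lin f) scalerDr !scalerA.
by rewrite mulrC.
Qed.
Definition homZ c f := Hom (homZ_lin c f).

Lemma homDA : associative homD.
Proof. by move=> f g h; apply: hom_ext => u /=; rewrite addrA. Qed.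
Lemma homDC : commutative homD.
Proof. by move=> f g; apply: hom_ext => u /=; rewrite addrC. Qed.
Lemma hom0D : left_id hom0 homD.
Proof. by move=> f; apply: hom_ext => u /=; rewrite add0r. Qed.
Lemma homND : left_inverse hom0 homN homD.
Proof. by move=> f; apply: hom_ext => u /=; rewrite addNr. Qed.

HB.instance Definition _ :=
  GRing.isZmodule.Build (hom V W) homDA homDC hom0D homND.

Lemma homZA a b (f : hom V W) : homZ a (homZ b f) = homZ (a * b) f.
Proof. by apply: hom_ext => u /=; rewrite scalerA. Qed.
Lemma homZ1 : left_id 1 homZ.
Proof. by move=> f; apply: hom_ext => u /=; rewrite scale1r. Qed.
Lemma homZDr : right_distributive homZ +%R.
Proof. by move=> a f g; apply: hom_ext => u /=; rewrite scalerDr. Qed.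
Lemma homZDl (f : hom V W) : {morph homZ^~ f : a b / a + b}.
Proof. by move=> a b; apply: hom_ext => u /=; rewrite scalerDl. Qed.

HB.instance Definition _ :=
  GRing.Zmodule_isLmodule.Build K (hom V W) homZA homZ1 homZDr homZDl.

End HomSpace.

(* The graded pieces.  We index by the "depth" n : nat, the piece of depth n *)
(* being U_{1-n} (degree 1 - n):                                             *)
(*    U n.0 = U_1 = V,   U (n.+1) = Hom(U_1, U n)  (so U 1 = End(U_1) = U_0,  *)
(*    U 2 = Hom(U_1, U_0) = U_{-1}, ..., U p = U_{-p+1}).                    *)

Fixpoint U (K : fieldType) (V : lmodType K) (n : nat) : lmodType K :=
  match n with
  | 0 => V
  | n'.+1 => (hom V (U V n') : lmodType K)
  end.

Definition deg (n : nat) : int := (1 - n%:Z)%R.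
Definition parity (n : nat) : bool := odd `|deg n|%N.

Definition sgn (K : fieldType) (n : nat) : K := (-1) ^+ parity n.
Definition sgn2 (K : fieldType) (m n : nat) : K := (-1) ^+ (parity m && parity n).

Definition castU (K : fieldType) (V : lmodType K) (m n : nat) (e : m = n)
  (x : U V m) : U V n := ecast k (U V k) e x.

(* A family of brackets on the homogeneous pieces:  [U_{1-d}, U_{1-e}] ->
   U_{1-(d+e-1)}; it is only meaningful when the bracket is defined, i.e.
   when (1-d)+(1-e) <= 1, i.e. (0 < d + e)%N. *)
Definition bracket_family (K : fieldType) (V : lmodType K) :=
  forall d e : nat, U V d -> U V e -> U V (d + e).-1.

Lemma eq_jac1 (d e f : nat) : (0 < e + f)%N -> (0 < d + e)%N ->
  (d + (e + f).-1).-1 = ((d + e).-1 + f).-1.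
Proof. move=> h h2; rewrite -!subn1; lia. Qed.
Lemma eq_jac2 (d e f : nat) : (0 < d + f)%N -> (0 < d + e)%N ->
  (e + (d + f).-1).-1 = ((d + e).-1 + f).-1.
Proof. move=> h1 h2; rewrite -!subn1; lia. Qed.
Lemma eq_app_l (d : nat) : d = (d.+1 + 0).-1.
Proof. by rewrite addn0. Qed.
Lemma eq_app_r (d e : nat) : (d + e.+1).-1 = d + e.
Proof. by rewrite addnS. Qed.
Lemma eq_hom (d e : nat) : (d.+1 + e.+1).-1 = (d + e).+1.
Proof. by rewrite addSn addnS. Qed.
Lemma eq_comm (d e : nat) : (e + d).-1 = (d + e).-1.
Proof. by rewrite addnC. Qed.

Definition is_U_bracket (K : fieldType) (V : lmodType K)
    (br : bracket_family V) : Prop :=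
  [/\ (forall d (x : U V d.+1) (u : U V 0),
          br d.+1 0 x u = castU (eq_app_l d) (x u)),
      (forall e (u : U V 0) (x : U V e.+1),
          br 0 e.+1 u x = - (sgn K e.+1 *: x u)) &
      (forall d e (x : U V d.+1) (y : U V e.+1) (u : U V 0),
          (castU (eq_hom d e) (br d.+1 e.+1 x y) : U V (d + e).+1) u
          = br d.+1 e x (y u)
            + sgn K e.+1 *: castU (eq_app_r d e) (br d e.+1 (x u) y))].

Definition semilocal_Lie_super (K : fieldType) (V : lmodType K)
    (br : bracket_family V) : Prop :=
  [/\
      (forall d e, (0 < d + e)%N -> forall (a : K) (x x' : U V d) (y : U V e),
          br d e (a *: x + x') y = a *: br d e x y + br d e x' y),
      (forall d e, (0 < d + e)%N -> forall (a : K) (x : U V d) (y y' : U V e),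
          br d e x (a *: y + y') = a *: br d e x y + br d e x y'),
      (forall d e (h : (0 < d + e)%N) (x : U V d) (y : U V e),
          br d e x y = - (sgn2 K d e *: castU (eq_comm d e) (br e d y x))) &
      (forall d e f (hde : (0 < d + e)%N) (hef : (0 < e + f)%N) (hdf : (0 < d + f)%N)
              (hdef : (1 < d + e + f)%N) (x : U V d) (y : U V e) (z : U V f),
          castU (@eq_jac1 d e f hef hde) (br d (e + f).-1 x (br e f y z))
          - sgn2 K d e *: castU (@eq_jac2 d e f hdf hde) (br e (d + f).-1 y (br d f x z))
          = br (d + e).-1 f (br d e x y) z)].

Definition prop3p1_for (K : fieldType) (V : lmodType K) : Prop :=
  (exists br : bracket_family V, is_U_bracket br) /\
  (forall br : bracket_family V, is_U_bracket br ->
     semilocal_Lie_super br /\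
     (forall (x y : U V 1) (u : V),
        (br 1 1 x y : U V 1) u = x (y u) - y (x u))).

(* Main.v *)
Require Import Defs.
From HB Require Import structures.
From mathcomp Require Import all_boot all_algebra reals complex.
From mathcomp Require Import zify.
Set Implicit Arguments.
Unset Strict Implicit.
Unset Printing Implicit Defensive.
Import GRing.Theory.
Local Open Scope ring_scope.

From mathcomp Require Import ring.
Lemma parityE n : parity n = ~~ odd n.
Proof.
rewrite /parity /deg; case: n => [|n] //.
have -> : (1 - n.+1%:Z = - n%:Z)%R.
  by rewrite -addn1 PoszD opprD addrA addrC addrA addNr add0r.
by rewrite abszN absz_nat /= negbK.
Qed.

Section Gen.
Variables (K : fieldType) (V : lmodType K).
Local Notation U := (U V).

Lemma happD n (f g : U n.+1) u : (f + g) u = f u + g u. Proof. by []. Qed.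
Lemma happZ n a (f : U n.+1) u : (a *: f) u = a *: f u. Proof. by []. Qed.
Lemma happN n (f : U n.+1) u : (- f) u = - f u. Proof. by []. Qed.
Lemma happ0 n u : (0 : U n.+1) u = 0. Proof. by []. Qed.

Lemma castU_id n (e : n = n) (x : U n) : castU e x = x.
Proof. by rewrite (eq_irrelevance e (erefl n)). Qed.

Fixpoint ev n : U n -> seq V -> V :=
  match n with
  | 0 => fun w _ => w
  | n'.+1 => fun w s => ev (w (head 0 s)) (behead s)
  end.

Lemma ev_ext n (w1 w2 : U n) : (forall s, ev w1 s = ev w2 s) -> w1 = w2.
Proof.
elim: n w1 w2 => [|n IH] w1 w2 H; first exact: (H [::]).
apply: hom_ext => u; apply: IH => s; exact: (H (u :: s)).
Qed.

Lemma ev_lin n a (w1 w2 : U n) s : ev (a *: w1 + w2) s = a *: ev w1 s + ev w2 s.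
Proof. by elim: n w1 w2 s => [|n IH] w1 w2 s //=; rewrite IH. Qed.
Lemma ev0 n s : ev (0 : U n) s = 0.
Proof. elim: n s => [|n IH] s; [by [] | exact: IH]. Qed.
Lemma evZ n a (w : U n) s : ev (a *: w) s = a *: ev w s.
Proof. by rewrite -[a *: w]addr0 ev_lin ev0 addr0. Qed.
Lemma evD n (w1 w2 : U n) s : ev (w1 + w2) s = ev w1 s + ev w2 s.
Proof. by have := ev_lin 1 w1 w2 s; rewrite !scale1r. Qed.
Lemma evN n (w : U n) s : ev (- w) s = - ev w s.
Proof. by rewrite -scaleN1r evZ scaleN1r. Qed.
Lemma ev_cast m n (e : m = n) (w : U m) s : ev (castU e w) s = ev w s.
Proof. by case: n / e. Qed.

Definition app n : U n -> V -> U n.-1 :=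
  match n with 0 => fun w _ => w | n'.+1 => fun w u => w u end.
Lemma ev_app n (w : U n) s : (0 < n)%N -> ev w s = ev (app w (head 0 s)) (behead s).
Proof. by case: n w. Qed.
Lemma app_lin n a (w1 w2 : U n) u : (0 < n)%N -> app (a *: w1 + w2) u = a *: app w1 u + app w2 u.
Proof. by case: n w1 w2. Qed.
Lemma app_linr n (w : U n) a u1 u2 : (0 < n)%N -> app w (a *: u1 + u2) = a *: app w u1 + app w u2.
Proof. by case: n w => // n w _ /=; rewrite (hom_lin w). Qed.


Section Br.
Variable br : bracket_family V.
Hypothesis HU : is_U_bracket br.

Lemma H1 d (x : U d.+1) (u : U 0) : br x u = castU (eq_app_l d) (x u).
Proof. by case: HU. Qed.
Lemma H2 e (u : U 0) (x : U e.+1) : br u x = - (sgn K e.+1 *: x u).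
Proof. by case: HU. Qed.
Lemma H3 d e (x : U d.+1) (y : U e.+1) (u : U 0) :
  (castU (eq_hom d e) (br x y) : U (d + e).+1) u
  = br x (y u) + sgn K e.+1 *: castU (eq_app_r d e) (br (x u) y).
Proof. by case: HU. Qed.

Lemma C1 d (x : U d) (u : V) s : (0 < d)%N -> ev (br x (u : U 0)) s = ev (app x u) s.
Proof. by case: d x => // d x _; rewrite H1 ev_cast. Qed.
Lemma C2 e (u : V) (x : U e) s : (0 < e)%N ->
  ev (br (u : U 0) x) s = - (sgn K e *: ev (app x u) s).
Proof. by case: e x => // e x _; rewrite H2 evN evZ. Qed.
Lemma C3 d e (x : U d) (y : U e) s : (0 < d)%N -> (0 < e)%N ->
  ev (br x y) s = ev (br x (app y (head 0 s))) (behead s)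
     + sgn K e *: ev (br (app x (head 0 s)) y) (behead s).
Proof.
case: d x => // d x _; case: e y => // e y _.
rewrite -(ev_cast (eq_hom d e)) /= H3 evD evZ ev_cast //.
Qed.


Lemma mod1 (W : lmodType K) (a c : K) (A B C D : W) :
  (a *: A + B) + c *: (a *: C + D) = a *: (A + c *: C) + (B + c *: D).
Proof.
by rewrite !scalerDr !scalerA mulrC addrACA.
Qed.
Lemma mod2 (W : lmodType K) (a c : K) (A B : W) :
  - (c *: (a *: A + B)) = a *: - (c *: A) + - (c *: B).
Proof. by rewrite scalerDr opprD !scalerN !scalerA mulrC. Qed.

Lemma bil_all n : forall d e, (d + e <= n)%N -> (0 < d + e)%N ->
  (forall a (x x' : U d) (y : U e), br (a *: x + x') y = a *: br x y + br x' y) /\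
  (forall a (x : U d) (y y' : U e), br x (a *: y + y') = a *: br x y + br x y').
Proof.
elim: n => [|n IH] d e hn hp; first by lia.
split=> a x x' y; apply: ev_ext => s; rewrite ev_lin.
- case: (posnP d) => [d0|dp]; [subst d|].
    by rewrite !C2 ?app_linr ?ev_lin ?mod2 //.
  case: (posnP e) => [e0|ep]; [subst e|].
    by rewrite !C1 ?app_lin ?ev_lin.
  rewrite !(C3 _ _ s) // app_lin //.
  have /(_ ltac:(lia) ltac:(lia)) [IHa _] := IH d e.-1.
  have /(_ ltac:(lia) ltac:(lia)) [IHb _] := IH d.-1 e.
  - by rewrite IHa IHb !ev_lin mod1.
- case: (posnP d) => [d0|dp]; [subst d|].
    by rewrite !C2 ?app_lin ?ev_lin ?mod2 //.
  case: (posnP e) => [e0|ep]; [subst e|].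
    by rewrite !C1 ?app_linr ?ev_lin.
  rewrite !(C3 _ _ s) // app_lin //.
  have /(_ ltac:(lia) ltac:(lia)) [_ IHa] := IH d e.-1.
  have /(_ ltac:(lia) ltac:(lia)) [_ IHb] := IH d.-1 e.
  - by rewrite IHa IHb !ev_lin mod1.
Qed.


Ltac sgn_pre := rewrite /sgn2 /sgn ?addSn ?addnS ?addn0 /= ?parityE /= ?oddD ?oddS /=.
Ltac sgn_fin := rewrite /= ?expr0 ?expr1; ring.

Lemma mod3 (c p q r : K) (A B : V) :
  - (c *: (- (p *: B) + q *: - (r *: A))) = (c * q * r) *: A + (c * p) *: B.
Proof.
by rewrite scalerDr opprD !scalerN !opprK !scalerA addrC.
Qed.

Lemma anti_ev n : forall d e, (d + e <= n)%N -> (0 < d + e)%N ->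
  forall (x : U d) (y : U e) s, ev (br x y) s = - (sgn2 K d e *: ev (br y x) s).
Proof.
elim: n => [|n IH] d e hn hp x y s; first by lia.
case: (posnP d) => [d0|dp]; [subst d|].
  by rewrite C2 // C1.
case: (posnP e) => [e0|ep]; [subst e|].
  rewrite C2 // C1 // scalerN opprK scalerA -[LHS]scale1r; congr (_ *: _).
  case: d dp {hp hn IH} x => // d _ x; sgn_pre; case: (odd d); sgn_fin.
rewrite !(C3 _ _ s) //.
rewrite (IH e d.-1 ltac:(lia) ltac:(lia)) (IH e.-1 d ltac:(lia) ltac:(lia)).
rewrite mod3 -[X in X + _ = _]scale1r; congr (_ *: _ + _ *: _).
  case: d dp {hp hn IH} x => // d _ x; case: e ep y => // e _ y.
  sgn_pre; case: (odd d); case: (odd e); sgn_fin.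
case: d dp {hp hn IH} x => // d _ x; case: e ep y => // e _ y.
sgn_pre; case: (odd d); case: (odd e); sgn_fin.
Qed.

Lemma anti d e (h : (0 < d + e)%N) (x : U d) (y : U e) :
  br x y = - (sgn2 K d e *: castU (eq_comm d e) (br y x)).
Proof.
apply: ev_ext => s; rewrite evN evZ ev_cast.
exact: (@anti_ev (d + e)).
Qed.

Lemma br_x0 d e (x : U d) : (0 < d + e)%N -> br x (0 : U e) = 0.
Proof.
move=> h; have := (bil_all (leqnn _) h).2 (-1) x 0 0.
by rewrite !scaleN1r addr0 oppr0 addNr.
Qed.
Lemma br_0x d e (y : U e) : (0 < d + e)%N -> br (0 : U d) y = 0.
Proof.
move=> h; have := (bil_all (leqnn _) h).1 (-1) 0 0 y.
by rewrite !scaleN1r addr0 oppr0 addNr.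
Qed.

Lemma brR0 d k k1 (x : U d) (w : U k) (w1 : U k1) s : k1 = k ->
  (forall t, ev w t = ev w1 t) -> ev (br x w) s = ev (br x w1) s.
Proof. by move=> E; subst k1 => h; rewrite (ev_ext h). Qed.
Lemma brL0 d k k1 (z : U d) (w : U k) (w1 : U k1) s : k1 = k ->
  (forall t, ev w t = ev w1 t) -> ev (br w z) s = ev (br w1 z) s.
Proof. by move=> E; subst k1 => h; rewrite (ev_ext h). Qed.

Lemma brR1 d k k1 (x : U d) (w : U k) (w1 : U k1) a s : k1 = k -> (0 < d + k)%N ->
  (forall t, ev w t = a *: ev w1 t) -> ev (br x w) s = a *: ev (br x w1) s.
Proof.
move=> E; subst k1 => hp h.
have -> : w = a *: w1 + 0 by apply: ev_ext => t; rewrite ev_lin ev0 addr0.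
by rewrite (bil_all (leqnn _) hp).2 br_x0 // addr0 evZ.
Qed.
Lemma brL1 d k k1 (z : U d) (w : U k) (w1 : U k1) a s : k1 = k -> (0 < k + d)%N ->
  (forall t, ev w t = a *: ev w1 t) -> ev (br w z) s = a *: ev (br w1 z) s.
Proof.
move=> E; subst k1 => hp h.
have -> : w = a *: w1 + 0 by apply: ev_ext => t; rewrite ev_lin ev0 addr0.
by rewrite (bil_all (leqnn _) hp).1 br_0x // addr0 evZ.
Qed.

Lemma brR2 d k k1 k2 (x : U d) (w : U k) (w1 : U k1) (w2 : U k2) c s :
  k1 = k -> k2 = k -> (0 < d + k)%N ->
  (forall t, ev w t = ev w1 t + c *: ev w2 t) ->
  ev (br x w) s = ev (br x w1) s + c *: ev (br x w2) s.
Proof.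
move=> E1 E2; subst k1 k2 => hp h.
have -> : w = c *: w2 + w1 by apply: ev_ext => t; rewrite ev_lin addrC.
by rewrite (bil_all (leqnn _) hp).2 ev_lin addrC.
Qed.
Lemma brL2 d k k1 k2 (z : U d) (w : U k) (w1 : U k1) (w2 : U k2) c s :
  k1 = k -> k2 = k -> (0 < k + d)%N ->
  (forall t, ev w t = ev w1 t + c *: ev w2 t) ->
  ev (br w z) s = ev (br w1 z) s + c *: ev (br w2 z) s.
Proof.
move=> E1 E2; subst k1 k2 => hp h.
have -> : w = c *: w2 + w1 by apply: ev_ext => t; rewrite ev_lin addrC.
by rewrite (bil_all (leqnn _) hp).1 ev_lin addrC.
Qed.

Lemma ev_cons n (w : U n) u t : (0 < n)%N -> ev (app w u) t = ev w (u :: t).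
Proof. by case: n w. Qed.
Lemma C3c d e (x : U d) (y : U e) u t : (0 < d)%N -> (0 < e)%N ->
  ev (br x y) (u :: t) = ev (br x (app y u)) t + sgn K e *: ev (br (app x u) y) t.
Proof. by move=> hd he; rewrite (C3 _ _ (u :: t)). Qed.

Lemma ac6 (A P Q R S T : V) :
  A + P + Q - (R + S + T) = A - R + (P - T + (Q - S)).
Proof.
rewrite !opprD !addrA.
rewrite [A - R + P]addrAC.
rewrite [A + P - R - T + Q]addrAC.
rewrite [A + P - R + Q]addrAC.
by rewrite [A + P + Q - R - T - S]addrAC.
Qed.
Lemma mod4 (g g' g'' sf se s1 s2 : K) (A1 A2 B1 B2 C1 C2 : V) :
  s1 = sf * se -> g * s2 = sf * g' -> g * sf = sf * se * g'' ->
  (A1 + sf *: B1 + s1 *: C1) - g *: (A2 + sf *: C2 + s2 *: B2)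
  = (A1 - g *: A2) + sf *: ((B1 - g' *: B2) + se *: (C1 - g'' *: C2)).
Proof.
move=> -> h2 h3.
rewrite !scalerDr !scalerN !scalerA h2 h3.
exact: ac6.
Qed.
Lemma modA (g g' c : K) (A B : V) : g * g' = c -> A - g *: - (g' *: B) = A + c *: B.
Proof. by move=> <-; rewrite scalerN opprK scalerA. Qed.
Lemma modB (a g s' c : K) (A B : V) : a = - (g * s') -> g * s' * c = 1 ->
  a *: A - g *: - (s' *: (A + c *: B)) = B.
Proof.
move=> -> h; rewrite scalerN opprK !scalerDr !scalerA mulrA h scale1r.
by rewrite addrA scaleNr addNr add0r.
Qed.
Lemma modC (a g s' c b : K) (A B : V) : g * a = - s' -> - (s' * c) = b ->
  - (s' *: (A + c *: B)) - g *: (a *: A) = b *: B.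
Proof.
move=> h1 <-; rewrite scalerA h1 scaleNr opprK scalerDr opprD scalerA.
by rewrite addrAC addNr add0r scaleNr.
Qed.

Lemma sgA d e : (0 < d)%N -> sgn2 K d e * sgn2 K e d.-1 = sgn K e.
Proof. by case: d => // d _; sgn_pre; case: (odd d); case: (odd e); sgn_fin. Qed.
Lemma sgB1 d f : (0 < d)%N -> (0 < f)%N -> - sgn K f = - (sgn2 K d 0 * sgn K (d + f).-1).
Proof. by case: d => // d _; case: f => // f _; sgn_pre; case: (odd d); case: (odd f); sgn_fin. Qed.
Lemma sgB2 d f : (0 < d)%N -> (0 < f)%N -> sgn2 K d 0 * sgn K (d + f).-1 * sgn K f = 1.
Proof. by case: d => // d _; case: f => // f _; sgn_pre; case: (odd d); case: (odd f); sgn_fin. Qed.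
Lemma sgC1 e f : (0 < e)%N -> (0 < f)%N -> sgn2 K 0 e * - sgn K f = - sgn K (e + f).-1.
Proof. by case: e => // e _; case: f => // f _; sgn_pre; case: (odd e); case: (odd f); sgn_fin. Qed.
Lemma sgC2 e f : (0 < e)%N -> (0 < f)%N -> - (sgn K (e + f).-1 * sgn K f) = - sgn K e.
Proof. by case: e => // e _; case: f => // f _; sgn_pre; case: (odd e); case: (odd f); sgn_fin. Qed.
Lemma sgD1 e f : (0 < e)%N -> (0 < f)%N -> sgn K (e + f).-1 = sgn K f * sgn K e.
Proof. by case: e => // e _; case: f => // f _; sgn_pre; case: (odd e); case: (odd f); sgn_fin. Qed.
Lemma sgD2 d e f : (0 < d)%N -> (0 < e)%N -> (0 < f)%N ->
  sgn2 K d e * sgn K (d + f).-1 = sgn K f * sgn2 K d e.-1.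
Proof.
case: d => // d _; case: e => // e _; case: f => // f _; sgn_pre.
by case: (odd d); case: (odd e); case: (odd f); sgn_fin.
Qed.
Lemma sgD3 d e f : (0 < d)%N -> (0 < e)%N -> (0 < f)%N ->
  sgn2 K d e * sgn K f = sgn K f * sgn K e * sgn2 K d.-1 e.
Proof.
case: d => // d _; case: e => // e _; case: f => // f _; sgn_pre.
by case: (odd d); case: (odd e); case: (odd f); sgn_fin.
Qed.

Lemma jac_ev n : forall d e f, (d + e + f <= n)%N -> (0 < d + e)%N ->
  (0 < e + f)%N -> (0 < d + f)%N ->
  forall (x : U d) (y : U e) (z : U f) s,
  ev (br x (br y z)) s - sgn2 K d e *: ev (br y (br x z)) s = ev (br (br x y) z) s.
Proof.
elim: n => [|n IH] d e f hn hde hef hdf x y z s; first by lia.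
case: (posnP f) => [f0|fp]; [subst f|].
  have dp : (0 < d)%N by lia.
  have ep : (0 < e)%N by lia.
  rewrite (@brR0 _ _ _ x (br y z) (app y z)); first last.
  - by move=> t; exact: C1.
  - by rewrite addn0.
  rewrite (@brR0 _ _ _ y (br x z) (app x z)); first last.
  - by move=> t; exact: C1.
  - by rewrite addn0.
  rewrite C1; last by lia.
  rewrite ev_cons; last by lia.
  rewrite C3c //.
  rewrite (@anti_ev _ _ _ (leqnn _) _ y (app x z)); last by lia.
  apply: modA; exact: sgA.
case: (posnP e) => [e0|ep]; [subst e|].
  have dp : (0 < d)%N by lia.
  rewrite (@brR1 _ _ _ x (br y z) (app z y) (- sgn K f)) //; first last.
  - by move=> t; rewrite C2 // scaleNr.
  - by lia.
  rewrite C2; last by lia.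
  rewrite ev_cons; last by lia.
  rewrite C3c //.
  rewrite (@brL0 _ _ _ z (br x y) (app x y)); first last.
  - by move=> t; exact: C1.
  - by rewrite addn0.
  by apply: modB; [apply: sgB1 | apply: sgB2].
case: (posnP d) => [d0|dp]; [subst d|].
  rewrite C2; last by lia.
  rewrite ev_cons; last by lia.
  rewrite C3c //.
  rewrite (@brR1 _ _ _ y (br x z) (app z x) (- sgn K f)) //; first last.
  - by move=> t; rewrite C2 // scaleNr.
  - by lia.
  rewrite (@brL1 _ _ _ z (br x y) (app y x) (- sgn K e)) //; first last.
  - by move=> t; rewrite C2 // scaleNr.
  - by lia.
  by apply: modC; [apply: sgC1 | apply: sgC2].
rewrite (C3 x (br y z) s) //; last by lia.
rewrite (C3 y (br x z) s) //; last by lia.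
rewrite (C3 (br x y) z s) //; last by lia.
set u := head 0 s; set t := behead s.
rewrite (@brR2 _ _ _ _ x (app (br y z) u) (br y (app z u)) (br (app y u) z) (sgn K f));
  first last.
- by move=> r; rewrite ev_cons ?C3c //; lia.
- by lia.
- by lia.
- by lia.
rewrite (@brR2 _ _ _ _ y (app (br x z) u) (br x (app z u)) (br (app x u) z) (sgn K f));
  first last.
- by move=> r; rewrite ev_cons ?C3c //; lia.
- by lia.
- by lia.
- by lia.
rewrite (@brL2 _ _ _ _ z (app (br x y) u) (br x (app y u)) (br (app x u) y) (sgn K e));
  first last.
- by move=> r; rewrite ev_cons ?C3c //; lia.
- by lia.
- by lia.
- by lia.
rewrite -(IH d e f.-1); try lia.
rewrite -(IH d e.-1 f); try lia.
rewrite -(IH d.-1 e f); try lia.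
apply: mod4; [exact: sgD1 | exact: sgD2 | exact: sgD3].
Qed.

Lemma jac d e f (hde : (0 < d + e)%N) (hef : (0 < e + f)%N) (hdf : (0 < d + f)%N)
  (x : U d) (y : U e) (z : U f) :
  castU (@eq_jac1 d e f hef hde) (br x (br y z))
  - sgn2 K d e *: castU (@eq_jac2 d e f hdf hde) (br y (br x z))
  = br (br x y) z.
Proof.
apply: ev_ext => s; rewrite evD evN evZ !ev_cast.
exact: (@jac_ev (d + e + f)).
Qed.
End Br.

Lemma castU_lin m n (e : m = n) a (w w' : U m) :
  castU e (a *: w + w') = a *: castU e w + castU e w'.
Proof. by case: n / e. Qed.
Lemma castUK m n (e : m = n) (w : U m) : castU (esym e) (castU e w) = w.
Proof. by subst n. Qed.
Lemma castUK' m n (e : m = n) (w : U n) : castU e (castU (esym e) w) = w.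
Proof. by subst n. Qed.

Definition bil d e (f : U d -> U e -> U (d + e).-1) :=
  (forall y, linear (f^~ y)) /\ (forall x, linear (f x)).

Definition step0 e : U 0 -> U e -> U (0 + e).-1 :=
  match e return U 0 -> U e -> U (0 + e).-1 with
  | 0 => fun _ _ => 0
  | e'.+1 => fun u x => - (sgn K e'.+1 *: x u)
  end.

Lemma step0_bil e : bil (@step0 e).
Proof.
case: e => [|e]; split => /=.
- by move=> y a u v; rewrite scaler0 addr0.
- by move=> x a u v; rewrite scaler0 addr0.
- by move=> x a u v /=; rewrite (hom_lin x) mod2.
- by move=> u a x x' /=; rewrite mod2.
Qed.

Section StepS.
Variables (d e : nat) (g : U d -> U e.+1 -> U (d + e.+1).-1)
  (h : U d.+1 -> U e -> U (d + e)).
Hypotheses (bg : bil g) (bh : bil (h : U d.+1 -> U e -> U (d.+1 + e).-1)).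

Definition stepS_fun (x : U d.+1) (y : U e.+1) (u : V) : U (d + e) :=
  h x (y u) + sgn K e.+1 *: castU (eq_app_r d e) (g (x u) y).

Lemma stepS_lin x y : linear (stepS_fun x y).
Proof.
move=> a u v; rewrite /stepS_fun (hom_lin y) (bh.2 x) (hom_lin x) (bg.1 y).
by rewrite castU_lin mod1.
Qed.

Definition stepS_hom x y : U (d + e).+1 := Defs.Hom (stepS_lin x y).

Definition stepS x y : U (d.+1 + e.+1).-1 := castU (esym (eq_hom d e)) (stepS_hom x y).

Lemma stepS_bil : bil stepS.
Proof.
split.
- move=> y a x x'; rewrite /stepS -castU_lin; congr castU.
  apply: hom_ext => u /=; rewrite /stepS_fun /=.
  by rewrite (bh.1 (y u)) (bg.1 y) castU_lin mod1.
- move=> x a y y'; rewrite /stepS -castU_lin; congr castU.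
  apply: hom_ext => u /=; rewrite /stepS_fun /=.
  by rewrite (bh.2 x) (bg.2 (x u)) castU_lin mod1.
Qed.
End StepS.

Lemma bilS0 d : bil (fun (x : U d.+1) (u : U 0) => castU (eq_app_l d) (x u)).
Proof.
split.
- by move=> u a x x' /=; rewrite castU_lin.
- by move=> x a u v /=; rewrite (hom_lin x) castU_lin.
Qed.

Fixpoint innerS d (G : forall e, {f : U d -> U e -> U (d + e).-1 | bil f}) (e : nat) :
  {f : U d.+1 -> U e -> U (d.+1 + e).-1 | bil f} :=
  match e return {f : U d.+1 -> U e -> U (d.+1 + e).-1 | bil f} with
  | 0 => exist _ (fun (x : U d.+1) (u : U 0) => castU (eq_app_l d) (x u)) (bilS0 d)
  | e'.+1 => exist _ (stepS (proj2_sig (G e'.+1)) (proj2_sig (innerS G e')))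
                     (stepS_bil (proj2_sig (G e'.+1)) (proj2_sig (innerS G e')))
  end.

Fixpoint brkS d : forall e, {f : U d -> U e -> U (d + e).-1 | bil f} :=
  match d return forall e, {f : U d -> U e -> U (d + e).-1 | bil f} with
  | 0 => fun e => exist _ (@step0 e) (step0_bil e)
  | d'.+1 => innerS (brkS d')
  end.

Definition brk : bracket_family V := fun d e => proj1_sig (brkS d e).

Lemma brk_U : is_U_bracket brk.
Proof.
split.
- by [].
- by [].
- move=> d e x y u.
  rewrite /brk /= /stepS castUK' /=.
  by [].
Qed.

Lemma prop_gen : prop3p1_for V.
Proof.
split; first by exists brk; exact: brk_U.
move=> br HU; split.
  split.
  - by move=> d e h a x x' y; exact: ((bil_all HU (leqnn _) h).1 a x x' y).
  - by move=> d e h a x y y'; exact: ((bil_all HU (leqnn _) h).2 a x y y').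
  - by move=> d e h x y; exact: (anti HU h x y).
  - by move=> d e f hde hef hdf _ x y z; exact: (jac HU hde hef hdf x y z).
move=> x y u.
have := @H3 br HU 0 0 x y u.
rewrite castU_id => ->.
rewrite (@H1 br HU 0) (@H2 br HU 0) !castU_id.
by rewrite /sgn parityE /= expr0 !scale1r.
Qed.
End Gen.

Theorem proposition3p1 (R : realType) :
  (forall V : lmodType R, prop3p1_for V) /\
  (forall V : lmodType R[i], prop3p1_for V).
Proof. by split=> V; apply: prop_gen. Qed.
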